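(* A $\tau$-equivariant polynomial automorphism of $\mathcal{D}$ extends uniquely to a polynomial automorphism of $\mathcal{M}(2;\mathbb{C})$ compatible with conjugation.
   Context: $\mathcal{D}$ is the set of diagonal $2\times2$ complex matrices, identified with $\mathbb{C}^2$ via $\mathrm{diag}(\lambda_1,\lambda_2)\mapsto(\lambda_1,\lambda_2)$; $\tau(\lambda_1,\lambda_2)=(\lambda_2,\lambda_1)$, and $\tau$-equivariant means commuting with $\tau$. A map $\Phi$ of $\mathcal{M}(2;\mathbb{C})$ is compatible with conjugation if $\mathrm{A}\Phi(\mathrm{M})\mathrm{A}^{-1}=\Phi(\mathrm{A}\mathrm{M}\mathrm{A}^{-1})$ for all $\mathrm{A}\in\mathrm{GL}(2;\mathbb{C})$; the extension restricts to the given automorphism on $\mathcal{D}$. *)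

(* Defs.v *)
(* complex numbers C = R[i] for R : realType (i.e. C up to iso),
   polynomial maps via multinomials' {mpoly C[n]}. *)
From HB Require Import structures.
From mathcomp Require Import all_boot all_order all_algebra.
From mathcomp Require Import reals.
From mathcomp Require Import complex.
From mathcomp Require Import mpoly.
Set Implicit Arguments. Unset Strict Implicit. Unset Printing Implicit Defensive.
Import GRing.Theory Num.Theory.
Local Open Scope ring_scope.
Local Open Scope complex_scope.

Section Defs.
Variable R : realType.
Local Notation C := (R[i]).

Definition poly_fun (n : nat) (g : ('I_n -> C) -> C) : Prop :=
  exists p : {mpoly C[n]}, forall x : 'I_n -> C, g x = p.@[x].

(* D identified with C^2 = C * C *)
Definition poly_map2 (f : C * C -> C * C) : Prop :=
  poly_fun (fun x : 'I_2 -> C => (f (x ord0, x (lift ord0 ord0))).1) /\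
  poly_fun (fun x : 'I_2 -> C => (f (x ord0, x (lift ord0 ord0))).2).

Definition poly_auto2 (f : C * C -> C * C) : Prop :=
  poly_map2 f /\ exists g, poly_map2 g /\ cancel f g /\ cancel g f.

Definition tau (l : C * C) : C * C := (l.2, l.1).

(* M(2;C) identified with C^4 via mxvec *)
Definition mx_of_coords (x : 'I_(2 * 2) -> C) : 'M[C]_2 := vec_mx (\row_k x k).

Definition poly_mapM (Phi : 'M[C]_2 -> 'M[C]_2) : Prop :=
  forall i j : 'I_2, poly_fun (fun x => Phi (mx_of_coords x) i j).

Definition poly_autoM (Phi : 'M[C]_2 -> 'M[C]_2) : Prop :=
  poly_mapM Phi /\ exists Psi, poly_mapM Psi /\ cancel Phi Psi /\ cancel Psi Phi.

Definition compat_conj (Phi : 'M[C]_2 -> 'M[C]_2) : Prop :=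
  forall A M : 'M[C]_2, A \in unitmx ->
    A *m Phi M *m invmx A = Phi (A *m M *m invmx A).

Definition diagD (l : C * C) : 'M[C]_2 :=
  diag_mx (\row_(i < 2) if i == ord0 then l.1 else l.2).

End Defs.

(* Main.v *)
Require Import Defs.
From HB Require Import structures.
From mathcomp Require Import all_boot all_order all_algebra.
From mathcomp Require Import reals complex mpoly ring.
From Stdlib Require Import FunctionalExtensionality.
Set Implicit Arguments. Unset Strict Implicit. Unset Printing Implicit Defensive.
Import GRing.Theory Num.Theory.
Local Open Scope ring_scope.

Section S.
Variable R : realType.
Local Notation C := (R[i]).

Lemma pf_const n (c : C) : poly_fun (fun _ : 'I_n -> C => c).
Proof. by exists c%:MP => x; rewrite mevalC. Qed.
Lemma pf_coord n (i : 'I_n) : poly_fun (fun x : 'I_n -> C => x i).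
Proof. by exists 'X_i => x; rewrite mevalXU. Qed.
Lemma pf_add n (f g : ('I_n -> C) -> C) : poly_fun f -> poly_fun g -> poly_fun (fun x => f x + g x).
Proof. by move=> [p hp] [q hq]; exists (p + q) => x; rewrite mevalD hp hq. Qed.
Lemma pf_mul n (f g : ('I_n -> C) -> C) : poly_fun f -> poly_fun g -> poly_fun (fun x => f x * g x).
Proof. by move=> [p hp] [q hq]; exists (p * q) => x; rewrite mevalM hp hq. Qed.
Lemma pf_opp n (f : ('I_n -> C) -> C) : poly_fun f -> poly_fun (fun x => - f x).
Proof. by move=> [p hp]; exists (- p) => x; rewrite mevalN hp. Qed.
Lemma pf_ext n (f g : ('I_n -> C) -> C) : f =1 g -> poly_fun f -> poly_fun g.
Proof. by move=> e [p hp]; exists p => x; rewrite -e hp. Qed.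
Lemma pf_sum n (I : Type) (r : seq I) (F : I -> ('I_n -> C) -> C) :
  (forall i, poly_fun (F i)) -> poly_fun (fun x => \sum_(i <- r) F i x).
Proof.
move=> h; elim: r => [|a r ih].
  by apply: pf_ext (pf_const n 0) => x; rewrite big_nil.
by apply: pf_ext (pf_add (h a) ih) => x; rewrite big_cons.
Qed.

Lemma pf_line n (g : ('I_n -> C) -> C) (a b : 'I_n -> C) : poly_fun g ->
  exists q : {poly C}, forall mu, g (fun i => a i + mu * b i) = q.[mu].
Proof.
move=> [p hp].
exists (\sum_(m <- msupp p) (p@_m)%:P * \prod_(i < n) ((a i)%:P + 'X * (b i)%:P) ^+ m i).
move=> mu; rewrite hp mevalE horner_sum; apply: eq_bigr => m _.
rewrite hornerM hornerC horner_prod; congr (_ * _); apply: eq_bigr => i _.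
by rewrite horner_exp hornerD hornerC hornerM hornerX hornerC.
Qed.

Definition i0 : 'I_2 := ord0.
Definition i1 : 'I_2 := lift ord0 ord0.
Lemma I2P (i : 'I_2) : i = i0 \/ i = i1.
Proof. by case: i => [[|[|//]] Hi]; [left|right]; apply/val_inj. Qed.

Definition mk2 (a b c d : C) : 'M[C]_2 :=
  \matrix_(i < 2, j < 2) if i == i0 then (if j == i0 then a else b)
                          else (if j == i0 then c else d).
Lemma mk2E a b c d :
  [/\ mk2 a b c d i0 i0 = a, mk2 a b c d i0 i1 = b,
      mk2 a b c d i1 i0 = c & mk2 a b c d i1 i1 = d].
Proof. by rewrite !mxE. Qed.
Lemma mul2E (A B : 'M[C]_2) i j : (A *m B) i j = A i i0 * B i0 j + A i i1 * B i1 j.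
Proof. by rewrite mxE big_ord_recl big_ord_recl big_ord0 addr0. Qed.
Lemma mx2P (A B : 'M[C]_2) : A i0 i0 = B i0 i0 -> A i0 i1 = B i0 i1 ->
  A i1 i0 = B i1 i0 -> A i1 i1 = B i1 i1 -> A = B.
Proof.
move=> h1 h2 h3 h4; apply/matrixP => i j.
by case: (I2P i) => ->; case: (I2P j) => ->.
Qed.
Lemma tr2E (A : 'M[C]_2) : \tr A = A i0 i0 + A i1 i1.
Proof. by rewrite /mxtrace big_ord_recl big_ord_recl big_ord0 addr0. Qed.
Lemma sc2E (c : C) : [/\ (c%:M : 'M[C]_2) i0 i0 = c, (c%:M : 'M[C]_2) i0 i1 = 0,
   (c%:M : 'M[C]_2) i1 i0 = 0 & (c%:M : 'M[C]_2) i1 i1 = c].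
Proof. by rewrite !mxE. Qed.
Lemma diagDE (l : C * C) : diagD l = mk2 l.1 0 0 l.2.
Proof. by apply: mx2P; rewrite !mxE. Qed.

Lemma conj_eq (Phi1 Phi2 : 'M[C]_2 -> 'M[C]_2) (M A T : 'M[C]_2) :
  compat_conj Phi1 -> compat_conj Phi2 -> A \in unitmx ->
  M *m A = A *m T -> Phi1 T = Phi2 T -> Phi1 M = Phi2 M.
Proof.
move=> c1 c2 uA e e12.
have -> : M = A *m T *m invmx A by rewrite -e mulmxK.
by rewrite -c1 // -c2 // e12.
Qed.

Lemma unit_of_inv (A B : 'M[C]_2) : A *m B = 1%:M -> A \in unitmx.
Proof. by case/mulmx1_unit. Qed.

Lemma up_distinct (Phi1 Phi2 : 'M[C]_2 -> 'M[C]_2) :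
  compat_conj Phi1 -> compat_conj Phi2 ->
  (forall l, Phi1 (diagD l) = Phi2 (diagD l)) ->
  forall lam mu c, lam != mu -> Phi1 (mk2 lam c 0 mu) = Phi2 (mk2 lam c 0 mu).
Proof.
move=> c1 c2 hd lam mu c hne.
have hz : mu - lam != 0 by rewrite subr_eq0 eq_sym.
apply: (conj_eq (A := mk2 1 c 0 (mu - lam)) (T := diagD (lam, mu))) => //.
- apply: (unit_of_inv (B := (mu - lam)^-1 *: mk2 (mu - lam) (- c) 0 1)).
  apply: mx2P; rewrite !mul2E !mxE /=; field; exact: hz.
- by rewrite diagDE; apply: mx2P; rewrite !mul2E !mxE /=; ring.
Qed.
Lemma poly_zero_off (lam : C) (q : {poly C}) :
  (forall mu, mu != lam -> q.[mu] = 0) -> q = 0.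
Proof.
move=> h; apply/eqP; apply: contraT => nz.
pose rs := [seq lam + (k.+1)%:R | k <- iota 0 (size q)].
have hr : all (root q) rs.
  apply/allP => x /mapP [k _ ->]; apply/rootP/h.
  by rewrite -subr_eq0 addrAC subrr add0r pnatr_eq0.
have hu : uniq rs.
  rewrite map_inj_uniq ?iota_uniq // => a b /addrI /eqP.
  by rewrite eqr_nat => /eqP [].
by have := max_poly_roots nz hr hu; rewrite size_map size_iota ltnn.
Qed.

Lemma line_mx (lam c mu : C) :
  mx_of_coords (fun k => mxvec (mk2 lam c 0 0) 0 k + mu * mxvec (mk2 0 0 0 1) 0 k)
  = mk2 lam c 0 mu.
Proof.
rewrite /mx_of_coords.
have -> : \row_k (mxvec (mk2 lam c 0 0) 0 k + mu * mxvec (mk2 0 0 0 1) 0 k)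
   = mxvec (mk2 lam c 0 0 + mu *: mk2 0 0 0 1).
  by apply/rowP => k; rewrite linearD linearZ !mxE.
rewrite mxvecK; apply: mx2P; rewrite !mxE /=; ring.
Qed.

Lemma up_all (Phi1 Phi2 : 'M[C]_2 -> 'M[C]_2) :
  poly_mapM Phi1 -> poly_mapM Phi2 ->
  compat_conj Phi1 -> compat_conj Phi2 ->
  (forall l, Phi1 (diagD l) = Phi2 (diagD l)) ->
  forall lam mu c, Phi1 (mk2 lam c 0 mu) = Phi2 (mk2 lam c 0 mu).
Proof.
move=> p1 p2 c1 c2 hd lam mu c.
case: (eqVneq lam mu) => [<-|hne]; last exact: up_distinct.
apply/matrixP => i j.
have [q1 h1] := pf_line (mxvec (mk2 lam c 0 0) 0) (mxvec (mk2 0 0 0 1) 0) (p1 i j).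
have [q2 h2] := pf_line (mxvec (mk2 lam c 0 0) 0) (mxvec (mk2 0 0 0 1) 0) (p2 i j).
have {}h1 nu : Phi1 (mk2 lam c 0 nu) i j = q1.[nu] by rewrite -line_mx h1.
have {}h2 nu : Phi2 (mk2 lam c 0 nu) i j = q2.[nu] by rewrite -line_mx h2.
have e : q1 - q2 = 0.
  apply: (poly_zero_off (lam := lam)) => nu hnu.
  by rewrite hornerD hornerN -h1 -h2 (up_distinct c1 c2 hd) ?subrr // eq_sym.
move/eqP: e; rewrite subr_eq0 => /eqP e.
by rewrite h1 h2 e.
Qed.
Lemma density (Phi1 Phi2 : 'M[C]_2 -> 'M[C]_2) :
  poly_mapM Phi1 -> poly_mapM Phi2 ->
  compat_conj Phi1 -> compat_conj Phi2 ->
  (forall l, Phi1 (diagD l) = Phi2 (diagD l)) ->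
  forall M, Phi1 M = Phi2 M.
Proof.
move=> p1 p2 c1 c2 hd M.
set a := M i0 i0; set b := M i0 i1; set c := M i1 i0; set d := M i1 i1.
have eM : M = mk2 a b c d by apply: mx2P; rewrite !mxE.
case: (eqVneq c 0) => [c0 | cn0].
  by rewrite eM c0; apply: up_all.
pose s := sqrtc ((a + d) ^+ 2 - 4 * (a * d - b * c)).
have hs : s ^+ 2 = (a + d) ^+ 2 - 4 * (a * d - b * c) by apply: sqr_sqrtc.
pose lam := (a + d + s) / 2.
have two : (2 : C) != 0 by rewrite pnatr_eq0.
have hl : lam ^+ 2 - (a + d) * lam + (a * d - b * c) = 0.
  have -> : lam ^+ 2 - (a + d) * lam + (a * d - b * c)
     = (s ^+ 2 - ((a + d) ^+ 2 - 4 * (a * d - b * c))) / 4.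
    by rewrite /lam; field.
  by rewrite (_ : s ^+ 2 - _ = 0) ?mul0r // hs subrr.
apply: (conj_eq (A := mk2 (lam - d) 1 c 0) (T := mk2 lam 1 0 (a + d - lam))) => //.
- apply: (unit_of_inv (B := c^-1 *: mk2 0 1 c (d - lam))).
  apply: mx2P; rewrite !mul2E !mxE /=; field; exact: cn0.
- rewrite eM; apply: mx2P; rewrite !mul2E !mxE /=; try ring.
  apply/eqP; rewrite -subr_eq0; apply/eqP.
  transitivity (- (lam ^+ 2 - (a + d) * lam + (a * d - b * c))); first ring.
  by rewrite hl oppr0.
- exact: up_all.
Qed.
Definition polyM (F : ('I_(2 * 2) -> C) -> 'M[C]_2) :=
  forall i j, poly_fun (fun x => F x i j).

Lemma pM_id : polyM (@mx_of_coords R).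
Proof.
move=> i j; apply: pf_ext (pf_coord (mxvec_index i j)) => x.
by rewrite /mx_of_coords /vec_mx !mxE.
Qed.
Lemma pM_const (A : 'M[C]_2) : polyM (fun _ => A).
Proof. by move=> i j; apply: pf_const. Qed.
Lemma pM_add F G : polyM F -> polyM G -> polyM (fun x => F x + G x).
Proof. by move=> hF hG i j; apply: pf_ext (pf_add (hF i j) (hG i j)) => x; rewrite mxE. Qed.
Lemma pM_opp F : polyM F -> polyM (fun x => - F x).
Proof. by move=> hF i j; apply: pf_ext (pf_opp (hF i j)) => x; rewrite mxE. Qed.
Lemma pM_mul F G : polyM F -> polyM G -> polyM (fun x => F x *m G x).
Proof.
move=> hF hG i j.
apply: pf_ext (pf_add (pf_mul (hF i i0) (hG i0 j)) (pf_mul (hF i i1) (hG i1 j))) => x.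
by rewrite mul2E.
Qed.
Lemma pM_scale (s : ('I_(2 * 2) -> C) -> C) F : poly_fun s -> polyM F ->
  polyM (fun x => s x *: F x).
Proof. by move=> hs hF i j; apply: pf_ext (pf_mul hs (hF i j)) => x; rewrite mxE. Qed.
Lemma pM_scalar (s : ('I_(2 * 2) -> C) -> C) : poly_fun s -> polyM (fun x => (s x)%:M).
Proof.
move=> hs i j; apply: pf_ext (pf_mul hs (pf_const _ (1%:M i j))) => x.
by rewrite !mxE mulr_natr.
Qed.
Lemma pM_exp F k : polyM F -> polyM (fun x => F x ^+ k).
Proof.
move=> hF; elim: k => [|k ih].
  by apply: (pM_const 1) .
by move=> i j; apply: pf_ext (pM_mul hF ih i j) => x; rewrite exprS.
Qed.
Lemma pM_sum (I : Type) (r : seq I) (F : I -> ('I_(2 * 2) -> C) -> 'M[C]_2) :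
  (forall m, polyM (F m)) -> polyM (fun x => \sum_(m <- r) F m x).
Proof.
move=> h i j; have := @pf_sum _ _ r (fun m x => F m x i j) (fun m => h m i j). apply: pf_ext => x.
by rewrite summxE.
Qed.
Lemma pf_tr F : polyM F -> poly_fun (fun x => \tr (F x)).
Proof. by move=> hF; apply: pf_ext (pf_add (hF i0 i0) (hF i1 i1)) => x; rewrite tr2E. Qed.

Definition adj2 (M : 'M[C]_2) : 'M[C]_2 := (\tr M)%:M - M.
Definition PhiP (p : {mpoly C[2]}) (M : 'M[C]_2) : 'M[C]_2 :=
  \sum_(m <- msupp p) p@_m *: (M ^+ m i0 *m adj2 M ^+ m i1).

Lemma pM_PhiP p F : polyM F -> polyM (fun x => PhiP p (F x)).
Proof.
move=> hF; apply: pM_sum => m; apply: pM_scale; first exact: pf_const.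
apply: pM_mul; apply: pM_exp => //.
by apply: pM_add; [apply: pM_scalar; apply: pf_tr | apply: pM_opp].
Qed.

Section Conj.
Variable A : 'M[C]_2.
Hypothesis uA : A \in unitmx.
Let cj (X : 'M[C]_2) := A *m X *m invmx A.

Lemma cjM X Y : cj (X *m Y) = cj X *m cj Y.
Proof.
rewrite /cj !mulmxA -(mulmxA (A *m X) (invmx A) A) mulVmx // mulmx1.
by [].
Qed.
Lemma cjD X Y : cj (X + Y) = cj X + cj Y.
Proof. by rewrite /cj mulmxDr mulmxDl. Qed.
Lemma cjN X : cj (- X) = - cj X.
Proof. by rewrite /cj mulmxN mulNmx. Qed.
Lemma cjZ c X : cj (c *: X) = c *: cj X.
Proof. by rewrite /cj -scalemxAr -scalemxAl. Qed.
Lemma cjS c : cj c%:M = c%:M.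
Proof. by rewrite /cj scalar_mxC -mulmxA mulmxV // mul_scalar_mx scalemx1. Qed.
Lemma cjX X k : cj (X ^+ k) = cj X ^+ k.
Proof.
elim: k => [|k ih]; first by rewrite !expr0 cjS.
by rewrite !exprS -!mulmxE cjM ih.
Qed.
Lemma cj_tr X : \tr (cj X) = \tr X.
Proof.
by rewrite /cj mxtrace_mulC mulmxA mulVmx // mul1mx.
Qed.
Lemma cj_adj X : cj (adj2 X) = adj2 (cj X).
Proof. by rewrite /adj2 cjD cjN cjS cj_tr. Qed.
Lemma cj_sum (I : Type) (r : seq I) (F : I -> 'M[C]_2) :
  cj (\sum_(i <- r) F i) = \sum_(i <- r) cj (F i).
Proof.
elim: r => [|a r ih]; first by rewrite !big_nil /cj mulmx0 mul0mx.
by rewrite !big_cons cjD ih.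
Qed.
Lemma cj_PhiP p M : cj (PhiP p M) = PhiP p (cj M).
Proof.
rewrite /PhiP cj_sum; apply: eq_bigr => m _.
by rewrite cjZ cjM !cjX cj_adj.
Qed.
End Conj.

Lemma compat_PhiP p : compat_conj (PhiP p).
Proof. by move=> A M uA; rewrite (cj_PhiP uA). Qed.

Lemma dM (x y : C * C) : diagD x *m diagD y = diagD (x.1 * y.1, x.2 * y.2).
Proof. by rewrite !diagDE; apply: mx2P; rewrite !mul2E !mxE /=; ring. Qed.
Lemma dX (x : C * C) k : diagD x ^+ k = diagD (x.1 ^+ k, x.2 ^+ k).
Proof.
elim: k => [|k ih].
  by rewrite expr0 !diagDE; apply: mx2P; rewrite !mxE.
by rewrite exprS -mulmxE ih dM -!exprS.
Qed.
Lemma dZ c (x : C * C) : c *: diagD x = diagD (c * x.1, c * x.2).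
Proof. by rewrite !diagDE; apply: mx2P; rewrite !mxE /= ?mulr0. Qed.
Lemma dD (x y : C * C) : diagD x + diagD y = diagD (x.1 + y.1, x.2 + y.2).
Proof. by rewrite !diagDE; apply: mx2P; rewrite !mxE /= ?addr0. Qed.
Lemma d_adj l : adj2 (diagD l) = diagD (tau l).
Proof. by rewrite /adj2 tr2E !diagDE; apply: mx2P; rewrite !mxE /=; ring. Qed.
Lemma d_sum (I : Type) (r : seq I) (F : I -> C * C) :
  \sum_(i <- r) diagD (F i) = diagD (\sum_(i <- r) (F i).1, \sum_(i <- r) (F i).2).
Proof.
elim: r => [|a r ih].
  by rewrite !big_nil diagDE; apply: mx2P; rewrite !mxE.
by rewrite !big_cons ih dD.
Qed.

Definition vv (l : C * C) : 'I_2 -> C := fun i => if i == i0 then l.1 else l.2.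

Lemma PhiP_diag p l : PhiP p (diagD l) = diagD (p.@[vv l], p.@[vv (tau l)]).
Proof.
rewrite /PhiP d_adj.
under eq_bigr do rewrite !dX dM dZ.
rewrite d_sum !mevalE /=; congr (diagD (_, _)); apply: eq_bigr => m _;
  by rewrite big_ord_recl big_ord_recl big_ord0 mulr1.
Qed.

Lemma ext_of_f (f : C * C -> C * C) (p : {mpoly C[2]}) :
  (forall x : 'I_2 -> C, (f (x ord0, x (lift ord0 ord0))).1 = p.@[x]) ->
  (forall l, f (tau l) = tau (f l)) ->
  forall l, PhiP p (diagD l) = diagD (f l).
Proof.
move=> hp heq l; rewrite PhiP_diag -!hp.
have e0 : forall l', vv l' ord0 = l'.1 by move=> l'; rewrite /vv eqxx.
have e1 : forall l', vv l' (lift ord0 ord0) = l'.2 by [].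
rewrite !e0 !e1; case: l => a b /=.
have -> : (b, a) = tau (a, b) by [].
by rewrite heq; case: (f (a, b)).
Qed.

Lemma main (f : C * C -> C * C) :
  poly_auto2 f ->
  (forall l, f (tau l) = tau (f l)) ->
  exists! Phi : 'M[C]_2 -> 'M[C]_2,
    poly_autoM Phi /\ compat_conj Phi /\
    (forall l, Phi (diagD l) = diagD (f l)).
Proof.
move=> [[[p hp] _] [g [[[q hq] _] [fg gf]]]] heq.
have geq : forall l, g (tau l) = tau (g l).
  by move=> l; rewrite -{1}(gf l) -heq fg.
have ef := ext_of_f hp heq; have eg := ext_of_f hq geq.
exists (PhiP p); split.
  split; last by split; [exact: compat_PhiP | exact: ef].
  split; first exact: (pM_PhiP p pM_id).
  exists (PhiP q); split; first exact: (pM_PhiP q pM_id).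
  split.
    move=> M; apply: (density (Phi1 := fun M => PhiP q (PhiP p M)) (Phi2 := id)).
    - exact: (pM_PhiP q (pM_PhiP p pM_id)).
    - exact: pM_id.
    - by move=> A N uA; rewrite (@compat_PhiP q A (PhiP p N) uA) (@compat_PhiP p A N uA).
    - by [].
    - by move=> l; rewrite ef eg fg.
  move=> M; apply: (density (Phi1 := fun M => PhiP p (PhiP q M)) (Phi2 := id)).
  - exact: (pM_PhiP p (pM_PhiP q pM_id)).
  - exact: pM_id.
  - by move=> A N uA; rewrite (@compat_PhiP p A (PhiP q N) uA) (@compat_PhiP q A N uA).
  - by [].
  - by move=> l; rewrite eg ef gf.
move=> Phi' [[pP' _] [cP' eP']].
apply: functional_extensionality => M; apply: density => //.
- exact: (pM_PhiP p pM_id).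
- exact: compat_PhiP.
- by move=> l; rewrite ef eP'.
Qed.

End S.

Theorem corollary2p5 (R : realType) (f : R[i] * R[i] -> R[i] * R[i]) :
  poly_auto2 f ->
  (forall l, f (tau l) = tau (f l)) ->
  exists! Phi : 'M[R[i]]_2 -> 'M[R[i]]_2,
    poly_autoM Phi /\ compat_conj Phi /\
    (forall l, Phi (diagD l) = diagD (f l)).
Proof. exact: main. Qed.
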